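(* For $n\ge 1$ let $f_n$ denote the number of noncrossing linked partitions of $[n]=\{1,\dots,n\}$. Then $f_1=1$ and for every $n\ge 1$, $$f_{n+1}=f_n+f_1f_n+f_2f_{n-1}+\cdots+f_nf_1 .$$
   Context: Two finite sets of integers $E,F$ are nearly disjoint if for every $i\in E\cap F$ one of the following holds: (a) $i=\min(E)$, $|E|>1$ and $i\neq\min(F)$; or (b) $i=\min(F)$, $|F|>1$ and $i\neq \min(E)$. A linked partition of $[n]$ is a set $\pi$ of nonempty subsets of $[n]$ (called blocks) whose union is $[n]$ and such that any two distinct blocks are nearly disjoint. Two blocks $B,B'$ are crossing if there are $a,c\in B$ and $b,d\in B'$ with $a<b<c<d$. A linked partition is noncrossing if no two distinct blocks are crossing. *)

(* Defs.v *)
(* The ground set [n] = {1,...,n} is represented by 'I_n,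
   the element i : 'I_n standing for the integer i+1 (an order isomorphism). *)
From mathcomp Require Import all_boot.
Set Implicit Arguments. Unset Strict Implicit. Unset Printing Implicit Defensive.

Section LinkedPartitions.
Variable n : nat.

Definition is_min (E : {set 'I_n}) (i : 'I_n) : bool :=
  (i \in E) && [forall j in E, (i <= j)%N].

Definition nearly_disjoint (E F : {set 'I_n}) : bool :=
  [forall i in E :&: F,
     (is_min E i && (1 < #|E|)%N && ~~ is_min F i)
  || (is_min F i && (1 < #|F|)%N && ~~ is_min E i)].

Definition linked_partition (P : {set {set 'I_n}}) : bool :=
  [&& set0 \notin P,
      cover P == [set: 'I_n] &
      [forall B in P, forall B' in P, (B != B') ==> nearly_disjoint B B']].

Definition crossing (B B' : {set 'I_n}) : bool :=
  [exists a in B, exists c in B, exists b in B', exists d in B',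
     [&& (a < b)%N, (b < c)%N & (c < d)%N]].

Definition noncrossing_linked_partition (P : {set {set 'I_n}}) : bool :=
  linked_partition P &&
  [forall B in P, forall B' in P, (B != B') ==> ~~ crossing B B'].

End LinkedPartitions.

Definition f (n : nat) : nat :=
  #|[set P : {set {set 'I_n}} | noncrossing_linked_partition P]|.

(* Main.v *)
Require Import Defs.
From mathcomp Require Import all_boot.
From Stdlib Require Import Lia.

Ltac tolia := repeat match goal with
 | H : is_true (_ && _) |- _ => let H1 := fresh "H" in let H2 := fresh "H" in case/andP: H => H1 H2
 | H : is_true (_ < _)%N |- _ => move/ltP: H => H; rewrite -?plusE -?minusE -?multE in H
 | H : is_true (_ <= _)%N |- _ => move/leP: H => H; rewrite -?plusE -?minusE -?multE in H
 end; try (first [apply/ltP | apply/leP]); rewrite -?plusE -?minusE -?multE; lia.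
Set Implicit Arguments. Unset Strict Implicit. Unset Printing Implicit Defensive.

Section Gen.
Variable n : nat.
Implicit Types (B E F X : {set 'I_n}) (P Q R : {set {set 'I_n}}).

Record NC X P : Prop := {
  nc0 : set0 \notin P;
  ncc : cover P = X;
  ncd : forall E F, E \in P -> F \in P -> E != F -> nearly_disjoint E F;
  ncx : forall E F, E \in P -> F \in P -> E != F -> ~~ crossing E F }.

Definition ncb X P := [&& set0 \notin P, cover P == X,
  [forall E in P, forall F in P, (E != F) ==> nearly_disjoint E F] &
  [forall E in P, forall F in P, (E != F) ==> ~~ crossing E F]].

Lemma NCP X P : reflect (NC X P) (ncb X P).
Proof.
apply: (iffP idP).
  case/and4P => h0 /eqP hc /forall_inP hd /forall_inP hx; split => // E F EP FP EF.
    by move/forall_inP: (hd E EP) => /(_ F FP) /implyP; apply.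
  by move/forall_inP: (hx E EP) => /(_ F FP) /implyP; apply.
case=> h0 hc hd hx; apply/and4P; split => //; first by apply/eqP.
  apply/forall_inP => E EP; apply/forall_inP => F FP; apply/implyP; exact: hd.
apply/forall_inP => E EP; apply/forall_inP => F FP; apply/implyP; exact: hx.
Qed.

Lemma nclp_ncb P : noncrossing_linked_partition P = ncb setT P.
Proof. by rewrite /noncrossing_linked_partition /linked_partition /ncb -!andbA. Qed.

Definition ndprop E F i :=
  (is_min E i && (1 < #|E|) && ~~ is_min F i) || (is_min F i && (1 < #|F|) && ~~ is_min E i).

Lemma ndP E F : reflect (forall i, i \in E -> i \in F -> ndprop E F i)
  (nearly_disjoint E F).
Proof.
apply: (iffP forall_inP) => H i.
  move=> iE iF; apply: H; by rewrite inE iE iF.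
by rewrite inE => /andP[iE iF]; apply: H.
Qed.

Lemma nd_sym E F : nearly_disjoint E F = nearly_disjoint F E.
Proof.
apply/ndP/ndP => H i iE iF; rewrite /ndprop orbC; exact: H.
Qed.

Lemma nd_disj E F : (forall i, i \in E -> i \in F -> False) -> nearly_disjoint E F.
Proof. by move=> H; apply/ndP => i iE iF; case: (H i iE iF). Qed.

Lemma is_minP E i : reflect (i \in E /\ forall j, j \in E -> i <= j) (is_min E i).
Proof.
apply: (iffP andP) => [[iE /forall_inP H]|[iE H]]; split => //; by apply/forall_inP.
Qed.

Lemma crossingP E F : reflect (exists a c b d, [/\ a \in E, c \in E, b \in F, d \in F &
   [&& (a < b)%N, (b < c)%N & (c < d)%N]]) (crossing E F).
Proof.
apply: (iffP idP).
  case/exists_inP => a aE /exists_inP [c cE /exists_inP [b bF /exists_inP [d dF H]]].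
  by exists a, c, b, d.
case=> a [c [b [d [aE cE bF dF H]]]].
apply/exists_inP; exists a => //; apply/exists_inP; exists c => //.
apply/exists_inP; exists b => //; apply/exists_inP; exists d => //.
Qed.

Lemma crossing_sub E E' F F' : E \subset E' -> F \subset F' -> crossing E F -> crossing E' F'.
Proof.
move=> /subsetP sE /subsetP sF /crossingP [a [c [b [d [aE cE bF dF H]]]]].
apply/crossingP; exists a, c, b, d; split; auto.
Qed.

Lemma crossing1l (x : 'I_n) F : crossing [set x] F = false.
Proof.
apply/negbTE/negP; case/crossingP => a [c [b [d [aE cE bF dF H]]]].
move: aE cE H; rewrite !inE => /eqP -> /eqP -> H; tolia.
Qed.

Lemma crossing1r (x : 'I_n) F : crossing F [set x] = false.
Proof.
apply/negbTE/negP; case/crossingP => a [c [b [d [aE cE bF dF H]]]].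
move: bF dF H; rewrite !inE => /eqP -> /eqP -> H; tolia.
Qed.

Lemma blk_sub X P B : NC X P -> B \in P -> B \subset X.
Proof. by move=> [_ <- _ _] BP; apply: bigcup_sup. Qed.

Lemma blk_cov X P x : NC X P -> x \in X -> exists2 B, B \in P & x \in B.
Proof. by move=> [_ <- _ _] /bigcupP [B BP xB]; exists B. Qed.

Lemma in_cover P x B : B \in P -> x \in B -> x \in cover P.
Proof. by move=> BP xB; apply/bigcupP; exists B. Qed.

Lemma shared X P E F i : NC X P -> E \in P -> F \in P -> E != F -> i \in E -> i \in F ->
  ndprop E F i.
Proof. move=> [_ _ hd _] EP FP EF; exact/ndP/hd. Qed.

Lemma min_uniq X P E F i : NC X P -> E \in P -> F \in P -> is_min E i -> is_min F i -> E = F.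
Proof.
move=> nc EP FP mE mF; apply/eqP; apply/negPn/negP => EF.
have := shared nc EP FP EF (proj1 (is_minP _ _ mE)) (proj1 (is_minP _ _ mF)).
by rewrite /ndprop mE mF !andbF.
Qed.

Lemma card_gt1 F x : x \in F -> F != [set x] -> 1 < #|F|.
Proof.
move=> xF Fx; rewrite ltnNge; apply/negP => H.
have : #|F| = 1.
  by apply/eqP; rewrite eqn_leq H card_gt0; apply/set0Pn; exists x.
move/eqP/cards1P => [y Fy]; move: xF Fx; rewrite Fy inE => /eqP ->; rewrite eqxx.
done.
Qed.

Lemma sub1_eq F x : F \subset [set x] -> F != set0 -> F = [set x].
Proof. by rewrite subset1 => /orP [/eqP -> // | /eqP ->]; rewrite eqxx. Qed.

End Gen.

Lemma card_bij (T U : finType) (A : {set T}) (B : {set U}) (g : T -> U) (k : U -> T) :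
  (forall x, x \in A -> g x \in B) -> (forall y, y \in B -> k y \in A) ->
  (forall x, x \in A -> k (g x) = x) -> (forall y, y \in B -> g (k y) = y) -> #|A| = #|B|.
Proof.
move=> gA kB kg gk; apply/eqP; rewrite eqn_leq; apply/andP; split.
- rewrite -(card_in_imset (f:=g)); last by move=> x y xA yA /(congr1 k); rewrite !kg.
  apply: subset_leq_card; apply/subsetP => y /imsetP[x xA ->]; exact: gA.
- rewrite -(card_in_imset (f:=k)); last by move=> x y xA yA /(congr1 g); rewrite !gk.
  apply: subset_leq_card; apply/subsetP => y /imsetP[x xA ->]; exact: kB.
Qed.

Section Relabel.
Variables (a b : nat) (h : 'I_a -> 'I_b).
Hypothesis hmono : forall i j : 'I_a, (i < j)%N -> (h i < h j)%N.
Implicit Types (E F X : {set 'I_a}) (P : {set {set 'I_a}}).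

Lemma h_lt i j : (h i < h j) = (i < j).
Proof.
case: (ltngtP i j) => [/hmono -> //| /hmono H | /val_inj ->]; last by rewrite ltnn.
by apply/negbTE; rewrite -leqNgt ltnW.
Qed.
Lemma h_le i j : (h i <= h j) = (i <= j).
Proof. by rewrite [LHS]leqNgt [RHS]leqNgt h_lt. Qed.
Lemma h_inj : injective h.
Proof. move=> i j e; apply/val_inj/eqP; rewrite eqn_leq -(h_le i j) -(h_le j i) e leqnn. done. Qed.

Definition rel (P : {set {set 'I_a}}) := [set h @: B | B : {set 'I_a} in P].
Definition pre (P : {set {set 'I_b}}) := [set h @^-1: B | B : {set 'I_b} in P].

Lemma mem_h (E : {set 'I_a}) i : (h i \in h @: E) = (i \in E).
Proof. exact: mem_imset h_inj. Qed.

Lemma is_min_rel (E : {set 'I_a}) i : is_min (h @: E) (h i) = is_min E i.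
Proof.
apply/is_minP/is_minP => [[hi H]|[iE H]]; split.
- by rewrite -mem_h.
- move=> j jE; rewrite -h_le; apply: H; by rewrite mem_h.
- by rewrite mem_h.
- move=> j /imsetP [k kE ->]; rewrite h_le; exact: H.
Qed.

Lemma card_rel (E : {set 'I_a}) : #|h @: E| = #|E|.
Proof. exact: card_imset h_inj. Qed.

Lemma nd_rel E F : nearly_disjoint (h @: E) (h @: F) = nearly_disjoint E F.
Proof.
apply/ndP/ndP => H i.
- move=> iE iF; have := H (h i); rewrite !mem_h => /(_ iE iF).
  by rewrite /ndprop !is_min_rel !card_rel.
- move=> /imsetP [j jE ->]; rewrite mem_h => jF; rewrite /ndprop !is_min_rel !card_rel.
  exact: H.
Qed.

Lemma cross_rel E F : crossing (h @: E) (h @: F) = crossing E F.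
Proof.
apply/crossingP/crossingP.
- case=> x [y [z [w [xE yE zF wF H]]]].
  move: xE yE zF wF H => /imsetP[i1 i1E ->] /imsetP[i2 i2E ->] /imsetP[i3 i3F ->] /imsetP[i4 i4F ->].
  rewrite !h_lt => H; by exists i1, i2, i3, i4.
- case=> x [y [z [w [xE yE zF wF H]]]].
  exists (h x), (h y), (h z), (h w); by rewrite !mem_h !h_lt.
Qed.

Lemma cover_rel P : cover (rel P) = h @: cover P.
Proof. by rewrite cover_imset imset_cover. Qed.

Lemma seth_inj : injective (fun B : {set 'I_a} => h @: B).
Proof. exact: imset_inj h_inj. Qed.

Lemma rel_inj : injective rel.
Proof. exact: imset_inj seth_inj. Qed.

Lemma NC_rel X P : NC (h @: X) (rel P) <-> NC X P.
Proof.
split.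
- case=> h0 hc hd hx; split.
  + apply: contra h0 => s0; apply/imsetP; exists set0 => //; by rewrite imset0.
  + apply: seth_inj; by rewrite -cover_rel.
  + move=> E F EP FP EF; rewrite -nd_rel; apply: hd.
    * by rewrite (mem_imset _ _ seth_inj).
    * by rewrite (mem_imset _ _ seth_inj).
    * by rewrite (inj_eq seth_inj).
  + move=> E F EP FP EF; rewrite -cross_rel; apply: hx.
    * by rewrite (mem_imset _ _ seth_inj).
    * by rewrite (mem_imset _ _ seth_inj).
    * by rewrite (inj_eq seth_inj).
- case=> h0 hc hd hx; split.
  + apply/imsetP => [[B BP /esym /eqP]]; rewrite imset_eq0 => /eqP B0; by rewrite -B0 BP in h0.
  + by rewrite cover_rel hc.
  + move=> E' F' /imsetP[E EP ->] /imsetP[F FP ->]; rewrite (inj_eq seth_inj) nd_rel; exact: hd.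
  + move=> E' F' /imsetP[E EP ->] /imsetP[F FP ->]; rewrite (inj_eq seth_inj) cross_rel; exact: hx.
Qed.

Lemma rel_pre (S : {set {set 'I_b}}) : NC (h @: setT) S -> rel (pre S) = S.
Proof.
move=> nc; rewrite /rel /pre -imset_comp -[RHS]imset_id; apply: eq_in_imset => B BP /=.
apply/setP => y; apply/idP/idP.
- by case/imsetP=> x; rewrite inE => hx ->.
- move=> yB; have /imsetP [x _ ex] := subsetP (blk_sub nc BP) y yB.
  by apply/imsetP; exists x => //; rewrite inE -ex.
Qed.

Lemma count_rel : #|[set S : {set {set 'I_b}} | ncb (h @: setT) S]| =
                  #|[set P : {set {set 'I_a}} | ncb setT P]|.
Proof.
symmetry; apply: (@card_bij _ _ _ _ rel pre).
- move=> P; rewrite !inE => /NCP nc; apply/NCP; exact/NC_rel.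
- move=> S; rewrite !inE => /NCP nc; apply/NCP; apply/NC_rel; by rewrite rel_pre.
- move=> P; rewrite inE => /NCP nc; apply: rel_inj; apply: rel_pre; exact/NC_rel.
- move=> S; rewrite inE => /NCP; exact: rel_pre.
Qed.

End Relabel.

Section Top.
Variable n : nat.
Implicit Types (B E F X : {set 'I_n.+1}) (P Q R : {set {set 'I_n.+1}}).

Definition top P (m : 'I_n.+1) :=
  [exists B in P, [&& ord0 \in B, m \in B & [forall i in B, (i <= m)%N]]].

Lemma is_min0 B : ord0 \in B -> is_min B ord0.
Proof. by move=> oB; apply/is_minP; split. Qed.

Lemma notmin0 B i : ord0 \in B -> i != ord0 -> ~~ is_min B i.
Proof.
move=> oB io; apply/negP => /is_minP [_ /(_ _ oB)]; rewrite leqn0 => i0.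
by case/negP: io; apply/eqP/val_inj => /=; apply/eqP.
Qed.

Lemma blk0_uniq X P E F : NC X P -> E \in P -> F \in P -> ord0 \in E -> ord0 \in F -> E = F.
Proof. move=> nc EP FP oE oF; exact: (min_uniq nc EP FP (is_min0 oE) (is_min0 oF)). Qed.

End Top.

Section DecA.
Variable n : nat.
Local Notation T := 'I_n.+1.
Variable m : T.
Hypothesis m0 : (0 < m)%N.
Implicit Types (B E F X : {set T}) (P Q R : {set {set T}}).

Definition Lm := [set i : T | (i < m)%N].
Definition Lm1 := [set i : T | (i <= m)%N].
Definition Rm := [set i : T | (m <= i)%N].
Definition aB B := if ord0 \in B then m |: B else B.
Definition dB B := if ord0 \in B then B :\ m else B.
Definition addm Q := [set aB B | B : {set T} in Q].
Definition delm Q := [set dB B | B : {set T} in Q].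
Definition gP Q R := addm Q :|: (R :\ [set m]).
Definition PL P := [set B in P | B \subset Lm1].
Definition PR P := [set B in P | B \subset Rm].
Definition hQ P := delm (PL P).
Definition hR P := PR P :|: (if [exists B in P, (B \subset Rm) && (m \in B)]
                             then set0 else [set [set m]]).

Lemma m_ne0 : m != ord0.
Proof. by apply/negP => /eqP me; move: m0; rewrite me. Qed.

Lemma sub_aB B : B \subset aB B.
Proof. by rewrite /aB; case: ifP => // _; apply: subsetUr. Qed.

Section WithQR.
Variables (Q R : {set {set T}}).
Hypotheses (nq : NC Lm Q) (nr : NC Rm R).

Lemma sQ E x : E \in Q -> x \in E -> (x < m)%N.
Proof. by move=> EQ xE; have := subsetP (blk_sub nq EQ) x xE; rewrite inE. Qed.
Lemma sR F x : F \in R -> x \in F -> (m <= x)%N.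
Proof. by move=> FR xF; have := subsetP (blk_sub nr FR) x xF; rewrite inE. Qed.
Lemma m_nQ E : E \in Q -> m \notin E.
Proof. by move=> EQ; apply/negP => /(sQ EQ); rewrite ltnn. Qed.

Lemma QQ E F : E \in Q -> F \in Q -> ord0 \in E -> ord0 \notin F ->
   [/\ nearly_disjoint (m |: E) F, ~~ crossing (m |: E) F & ~~ crossing F (m |: E)].
Proof.
move=> EQ FQ oE oF.
have EF : E != F by apply: contraNneq oF => <-.
have oE' : ord0 \in m |: E by rewrite !inE oE orbT.
split.
- apply/ndP => i; rewrite !inE => /orP[/eqP ie | iE] iF.
    by move: iF; rewrite ie; move/negP: (m_nQ FQ).
  have io : i != ord0 by apply: contraNneq oF => <-.
  have := shared nq EQ FQ EF iE iF.
  by rewrite /ndprop (negbTE (notmin0 oE io)) (negbTE (notmin0 oE' io)).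
- apply/negP; case/crossingP => a [c [b [d [aE cE bF dF H]]]].
  have dm := sQ FQ dF.
  move: aE cE; rewrite !inE => /orP[/eqP ea|aE] /orP[/eqP ec|cE].
  + by move: H; rewrite ea ec => H; tolia.
  + by move: H; rewrite ea => H; tolia.
  + by move: H; rewrite ec => H; tolia.
  case/negP: (ncx nq EQ FQ EF); apply/crossingP; exists a, c, b, d; split => //.
- apply/negP; case/crossingP => a [c [b [d [aF cF bE dE H]]]].
  have cm := sQ FQ cF.
  have ao : a != ord0 by apply: contraNneq oF => <-.
  have a0 : (0 < a)%N by rewrite lt0n; apply: contra ao => /eqP a0; apply/eqP/val_inj.
  move: bE dE; rewrite !inE => /orP[/eqP eb|bE] /orP[/eqP ed|dE].
  + by move: H; rewrite eb ed => H; tolia.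
  + by move: H; rewrite eb => H; tolia.
  + case/negP: (ncx nq EQ FQ EF); apply/crossingP; exists ord0, b, a, c; split => //.
    by case/and3P: H => h1 h2 _; rewrite /= a0 h1 h2.
  have FE : F != E by rewrite eq_sym.
  case/negP: (ncx nq FQ EQ FE); apply/crossingP.
  by exists a, c, b, d; split.
Qed.


Lemma aB_le E x : E \in Q -> x \in aB E -> (x <= m)%N.
Proof.
move=> EQ; rewrite /aB; case: ifP => _; last by move/(sQ EQ)/ltnW.
by rewrite !inE => /orP[/eqP -> // | /(sQ EQ)/ltnW].
Qed.

Lemma QR E F : E \in Q -> F \in R -> F != [set m] ->
   [/\ nearly_disjoint (aB E) F, ~~ crossing (aB E) F & ~~ crossing F (aB E)].
Proof.
move=> EQ FR Fm; split.
- apply/ndP => i iE iF.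
  have im : i = m by apply/val_inj => /=; have h1 := aB_le EQ iE; have h2 := sR FR iF; tolia.
  subst i.
  have oE : ord0 \in E.
    by move: iE; rewrite /aB; case: ifP => // _ mE; move/negP: (m_nQ EQ).
  have oE' : ord0 \in aB E by apply: (subsetP (sub_aB E)).
  apply/orP; right; rewrite (notmin0 oE' m_ne0) (card_gt1 iF Fm) !andbT.
  by apply/is_minP; split => // j /(sR FR).
- apply/negP; case/crossingP => a [c [b [d [aE cE bF dF H]]]].
  have h1 := aB_le EQ cE; have h2 := sR FR bF; tolia.
- apply/negP; case/crossingP => a [c [b [d [aF cF bE dE H]]]].
  have h1 := aB_le EQ dE; have h2 := sR FR aF; tolia.
Qed.

Lemma lemA : NC setT (gP Q R) /\ top (gP Q R) m.
Proof.
have [B0 B0Q oB0] : exists2 B0, B0 \in Q & ord0 \in B0.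
  by apply: (blk_cov nq); rewrite inE.
have aB0 : aB B0 = m |: B0 by rewrite /aB oB0.
have aQ : forall E, E \in Q -> aB E \in gP Q R.
  by move=> E EQ; rewrite in_setU; apply/orP; left; apply/imsetP; exists E.
have B0g := aQ _ B0Q.
split; last first.
  apply/exists_inP; exists (aB B0) => //.
  rewrite aB0; apply/and3P; split; [by rewrite !inE oB0 orbT | by rewrite !inE eqxx | ].
  apply/forall_inP => i.
  by rewrite !inE => /orP[/eqP -> // | /(sQ B0Q)/ltnW].
split.
- rewrite in_setU negb_or; apply/andP; split.
  + apply/negP => /imsetP [E EQ]; rewrite /aB; case: ifP => _ e.
      have : m \in (set0 : {set T}) by rewrite e !inE eqxx.
      by rewrite inE.
    by move: (nc0 nq); rewrite e EQ.
  + by rewrite in_setD1 negb_and (nc0 nr) orbT.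
- apply/setP => x; rewrite inE; case: (ltnP x m) => xm.
  + have xL : x \in Lm by rewrite inE.
    have [E EQ xE] := blk_cov nq xL.
    apply: (in_cover (aQ _ EQ)); exact: (subsetP (sub_aB E)).
  + have xR : x \in Rm by rewrite inE.
    have [F FR xF] := blk_cov nr xR.
    case: (F =P [set m]) => [Fm | Fm].
      apply: (in_cover B0g); move: xF; rewrite Fm aB0 !inE => ->; done.
    apply: (in_cover (B := F)) => //; rewrite in_setU in_setD1 FR andbT; apply/orP; right.
    by apply/eqP.
- move=> E' F'; rewrite !in_setU !in_setD1.
  move=> /orP[/imsetP[E EQ ->] | /andP[E1 ER]] /orP[/imsetP[F FQ ->] | /andP[F1 FR]] EF.
  + have EF0 : E != F by apply: contraNneq EF => ->.
    rewrite /aB; case: ifP => oE; case: ifP => oF.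
    * by case/negP: EF0; apply/eqP; apply: (blk0_uniq nq).
    * by case: (QQ EQ FQ oE (negbT oF)).
    * by rewrite nd_sym; case: (QQ FQ EQ oF (negbT oE)).
    * exact: (ncd nq).
  + by case: (QR EQ FR F1).
  + by rewrite nd_sym; case: (QR FQ ER E1).
  + exact: (ncd nr).
- move=> E' F'; rewrite !in_setU !in_setD1.
  move=> /orP[/imsetP[E EQ ->] | /andP[E1 ER]] /orP[/imsetP[F FQ ->] | /andP[F1 FR]] EF.
  + have EF0 : E != F by apply: contraNneq EF => ->.
    rewrite /aB; case: ifP => oE; case: ifP => oF.
    * by case/negP: EF0; apply/eqP; apply: (blk0_uniq nq).
    * by case: (QQ EQ FQ oE (negbT oF)).
    * by case: (QQ FQ EQ oF (negbT oE)).
    * exact: (ncx nq).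
  + by case: (QR EQ FR F1).
  + by case: (QR FQ ER E1).
  + exact: (ncx nr).
Qed.

End WithQR.
End DecA.

Section WithP.
Variables (n : nat) (m : 'I_n.+1).
Hypothesis m0 : (0 < m)%N.
Local Notation T := 'I_n.+1.
Implicit Types (B E F X : {set T}).
Variables (P : {set {set T}}) (B0 : {set T}).
Hypotheses (np : NC setT P) (B0P : B0 \in P) (oB0 : ord0 \in B0) (mB0 : m \in B0)
  (leB0 : forall i, i \in B0 -> (i <= m)%N).

Local Notation Lm1 := (Lm1 m).
Local Notation Rm := (Rm m).
Local Notation Lm := (Lm m).

Lemma pB1 E : E \in P -> ord0 \in E -> E = B0.
Proof. by move=> EP oE; apply: (blk0_uniq np EP B0P oE oB0). Qed.

Lemma set1_neq0 (x : T) : [set x] != set0.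
Proof. apply/set0Pn; exists x; exact: set11. Qed.

Lemma pB2 : [set m] \notin P.
Proof.
apply/negP => mP.
have ne : [set m] != B0.
  apply/eqP => e; have := oB0; rewrite -e in_set1 => /eqP o.
  by move: (m_ne0 m0); rewrite -o eqxx.
have := shared np mP B0P ne (set11 m) mB0.
rewrite /ndprop cards1 (negbTE (notmin0 oB0 (m_ne0 m0))) /=.
by rewrite !andbF.
Qed.

Lemma pB3 E : E \in P -> E \subset Lm1 \/ E \subset Rm.
Proof.
move=> EP; case: (boolP (E \subset Lm1)) => [|/subsetPn [x xE xL]]; first by left.
have xL' : ~~ (x \in [set i : T | (i <= m)%N]) := xL.
have mx : (m < x)%N by move: xL'; rewrite inE -ltnNge.
right; apply/subsetP => y yE; rewrite inE leqNgt.
apply/negP => ym.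
have EB : B0 != E by apply/eqP => e; move: xE; rewrite -e => /leB0 h1; tolia.
have y0 : (0 < y)%N.
  rewrite lt0n; apply/negP => /eqP y0.
  have : y = ord0 by apply/val_inj.
  move=> ey; rewrite ey in yE; move: EB; rewrite (pB1 EP yE) eqxx //.
case/negP: (ncx np B0P EP EB); apply/crossingP; exists ord0, m, y, x; split => //.
by apply/and3P; split.
Qed.

Lemma pB4 E : E \in P -> m \in E -> E \subset Lm1 -> E = B0.
Proof.
move=> EP mE EL; apply/eqP; apply/negPn/negP => EB.
have := shared np EP B0P EB mE mB0.
rewrite /ndprop => /orP[/andP[/andP[mm c1] _]|/andP[/andP[]]]; last first.
  by rewrite (negbTE (notmin0 oB0 (m_ne0 m0))).
have : E \subset [set m].
  apply/subsetP => j jE; rewrite inE; apply/eqP/val_inj => /=.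
  have h1 := subsetP EL j jE; rewrite inE in h1; move/is_minP: mm => [_ H2]; have h2 := H2 j jE; tolia.
by move/subset_leq_card; rewrite cards1 leqNgt c1.
Qed.

Lemma setD1_nin (E : {set T}) (x : T) : x \notin E -> E :\ x = E.
Proof. by move=> xE; apply/setP => y; rewrite in_setD1; case: eqP => // ->; rewrite (negbTE xE). Qed.

Lemma dB_PL E : E \in P -> E \subset Lm1 -> dB m E = E :\ m.
Proof.
move=> EP EL; rewrite /dB; case: ifP => // oE.
rewrite setD1_nin //; apply/negP => mE.
by move: oE; rewrite (pB4 EP mE EL) oB0.
Qed.

Lemma hQ_eq : hQ m P = [set E :\ m | E : {set T} in PL m P].
Proof. by apply: eq_in_imset => E; rewrite inE => /andP[EP EL]; apply: dB_PL. Qed.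

Lemma ismin_D1 E i : E \subset Lm1 -> i \in E -> i != m -> is_min (E :\ m) i = is_min E i.
Proof.
move=> EL iE im; apply/is_minP/is_minP => [[iE' H]|[_ H]]; split => //.
- move=> j jE; case: (j =P m) => [->|jm].
    by have := subsetP EL i iE; rewrite inE.
  by apply: H; rewrite in_setD1 jE andbT; apply/eqP.
- by rewrite in_setD1 im.
- by move=> j; rewrite in_setD1 => /andP[_ /H].
Qed.

Lemma card_D1 E F i : E \in P -> F \in P -> E \subset Lm1 -> E != F -> i \in F -> is_min E i ->
  #|E :\ m| = #|E|.
Proof.
move=> EP FP EL EF iF mi; rewrite [RHS](cardsD1 m E); case mE: (m \in E) => //.
have e := pB4 EP mE EL; subst E.
case/is_minP: mi => _ /(_ _ oB0); rewrite leqn0 => /eqP i0.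
have ei : i = ord0 by apply/val_inj.
subst i; by move: EF; rewrite (pB1 FP iF) eqxx.
Qed.

Lemma lemB1 : NC Lm (hQ m P).
Proof.
rewrite hQ_eq; split.
- apply/negP => /imsetP [E]; rewrite inE => /andP[EP EL] e.
  have : E \subset [set m].
    apply/subsetP => x xE; rewrite inE; apply/negPn/negP => xm.
    have : x \in E :\ m by rewrite in_setD1 xm xE.
    by rewrite -e inE.
  move/sub1_eq => H; have E0 : E != set0 by apply: contraNneq (nc0 np) => <-.
  by move: (pB2); rewrite -(H E0) EP.
- apply/setP => x; rewrite inE; apply/idP/idP.
  + case/bigcupP => E' /imsetP[E]; rewrite inE => /andP[EP EL] -> /[!in_setD1] /andP[xm xE].
    have := subsetP EL x xE; rewrite inE ltn_neqAle => ->; by rewrite andbT.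
  + move=> xm.
    have [E EP xE] := blk_cov np (in_setT x).
    have EL : E \subset Lm1.
      case: (pB3 EP) => // /subsetP /(_ x xE); rewrite inE => h1; tolia.
    apply/bigcupP; exists (E :\ m).
      by apply/imsetP; exists E => //; rewrite inE EP EL.
    by rewrite in_setD1 xE andbT; apply/negP => /eqP e; move: xm; rewrite e ltnn.
- move=> E' F' /imsetP[E]; rewrite inE => /andP[EP EL] -> /imsetP[F]; rewrite inE => /andP[FP FL] -> EF'.
  have EF : E != F by apply: contraNneq EF' => ->.
  apply/ndP => i; rewrite !in_setD1 => /andP[im iE] /andP[_ iF].
  have := shared np EP FP EF iE iF.
  rewrite /ndprop !ismin_D1 //.
  case/orP => /andP[/andP[mi c1] nm].
  + by rewrite (card_D1 EP FP EL EF iF mi) mi c1 nm.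
  + have FE : F != E by rewrite eq_sym.
    by rewrite (card_D1 FP EP FL FE iE mi) mi c1 nm orbT.
- move=> E' F' /imsetP[E]; rewrite inE => /andP[EP EL] -> /imsetP[F]; rewrite inE => /andP[FP FL] -> EF'.
  have EF : E != F by apply: contraNneq EF' => ->.
  apply: contra (ncx np EP FP EF); apply: crossing_sub; exact: subD1set.
Qed.

Lemma hRc E : E \in (if [exists B in P, (B \subset Rm) && (m \in B)] then set0 else [set [set m]]) ->
  E = [set m] /\ forall B, B \in P -> B \subset Rm -> m \notin B.
Proof.
case: ifP => [_|/negbT nex]; first by rewrite inE.
rewrite inE => /eqP ->; split => // B BP BR; apply/negP => mB; case/negP: nex.
by apply/exists_inP; exists B => //; rewrite BR mB.
Qed.

Lemma lemB2 : NC Rm (hR m P).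
Proof.
split.
- rewrite in_setU negb_or inE (negbTE (nc0 np)) /=.
  by apply/negP => /hRc [e _]; move: (set1_neq0 m); rewrite -e eqxx.
- apply/setP => x; rewrite inE; apply/idP/idP.
  + case/bigcupP => E; rewrite in_setU => /orP[|/hRc [-> _]].
      by rewrite inE => /andP[_ /subsetP H] /H; rewrite inE.
    by rewrite inE => /eqP ->.
  + move=> mx; case: (x =P m) => [->|xm].
      case ex: [exists B in P, (B \subset Rm) && (m \in B)].
        case/exists_inP: ex => B BP /andP[BR mB]; apply/bigcupP; exists B => //.
        by rewrite in_setU inE BP BR.
      apply/bigcupP; exists [set m]; last by rewrite inE.
      by rewrite in_setU ex !inE eqxx orbT.
    have [E EP xE] := blk_cov np (in_setT x).
    have ER : E \subset Rm.
      case: (pB3 EP) => // /subsetP /(_ x xE); rewrite inE => xm'.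
      by case: xm; apply/val_inj/eqP; rewrite eqn_leq xm' mx.
    by apply/bigcupP; exists E => //; rewrite in_setU inE EP ER.
- move=> E F; rewrite !in_setU => /orP[EPR|/hRc [eE hE]] /orP[FPR|/hRc [eF hF]] EF.
  + by move: EPR FPR; rewrite !inE => /andP[EP _] /andP[FP _]; apply: (ncd np).
  + move: EPR; rewrite inE => /andP[EP ER]; subst F; apply: nd_disj => i iE.
    by rewrite inE => /eqP ei; subst i; move: iE; apply/negP; apply: hF.
  + move: FPR; rewrite inE => /andP[FP FR]; subst E; apply: nd_disj => i.
    by rewrite inE => /eqP ei; subst i; apply/negP; apply: hE.
  + by move: EF; rewrite eE eF eqxx.
- move=> E F; rewrite !in_setU => /orP[EPR|/hRc [eE hE]] /orP[FPR|/hRc [eF hF]] EF.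
  + by move: EPR FPR; rewrite !inE => /andP[EP _] /andP[FP _]; apply: (ncx np).
  + by rewrite eF crossing1r.
  + by rewrite eE crossing1l.
  + by move: EF; rewrite eE eF eqxx.
Qed.

Lemma lemD : gP m (hQ m P) (hR m P) = P.
Proof.
have e1 : addm m (hQ m P) = PL m P.
  rewrite /addm /hQ /delm -imset_comp -[RHS]imset_id; apply: eq_in_imset => E.
  rewrite inE => /andP[EP EL] /=; rewrite /dB; case: ifP => oE.
    have eB := pB1 EP oE; subst E.
    rewrite /aB in_setD1 oB0 andbT eq_sym (m_ne0 m0); exact: setD1K.
  by rewrite /aB oE.
have e2 : hR m P :\ [set m] = PR m P.
  apply/setP => E; rewrite in_setD1 in_setU; case: (E =P [set m]) => [->|ne] /=.
    by rewrite inE (negbTE pB2).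
  by case: ifP => _; rewrite ?inE ?orbF // (introF eqP ne) orbF.
rewrite /gP e1 e2; apply/setP => E; rewrite in_setU !inE.
case EP: (E \in P) => //=; by case: (pB3 EP) => ->; rewrite ?orbT.
Qed.

End WithP.

Section C.
Variables (n : nat) (m : 'I_n.+1).
Hypothesis m0 : (0 < m)%N.
Local Notation T := 'I_n.+1.
Variables (Q R : {set {set T}}).
Hypotheses (nq : NC (Lm m) Q) (nr : NC (Rm m) R).

Lemma is_min1 (x : T) : is_min [set x] x.
Proof. by apply/is_minP; split; [exact: set11 | move=> j; rewrite inE => /eqP ->]. Qed.

Lemma dBaB (E : {set T}) : m \notin E -> dB m (aB m E) = E.
Proof.
move=> mE; rewrite /dB /aB; case: (boolP (ord0 \in E)) => oE.
  have o' : ord0 \in m |: E by apply: (subsetP (subsetUr _ _)).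
  by rewrite o' setU1K.
by rewrite (negbTE oE).
Qed.

Lemma lemC1 : hQ m (gP m Q R) = Q.
Proof.
have ePL : PL m (gP m Q R) = addm m Q.
  apply/setP => B; rewrite inE in_setU in_setD1; apply/idP/idP.
  - case/andP => /orP[// | /andP[Bm BR]] BL; exfalso.
    have : B \subset [set m].
      apply/subsetP => x xB; rewrite inE; apply/eqP/val_inj => /=.
      have h1 := subsetP BL x xB; rewrite inE in h1; have h2 := sR nr BR xB; tolia.
    move/sub1_eq => H; have B0 : B != set0 by apply: contraNneq (nc0 nr) => <-.
    by move: Bm; rewrite (H B0) eqxx.
  - move=> BQ; rewrite BQ /=; case/imsetP: BQ => E EQ ->; apply/subsetP => x /(aB_le nq EQ) h.
    by rewrite inE.
rewrite /hQ ePL /delm /addm -imset_comp -[RHS]imset_id; apply: eq_in_imset => E EQ /=.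
exact: dBaB (m_nQ nq EQ).
Qed.

Lemma lemC2 : hR m (gP m Q R) = R.
Proof.
have ePR : PR m (gP m Q R) = R :\ [set m].
  apply/setP => B; rewrite inE in_setU; apply/idP/idP.
  - case/andP => /orP[/imsetP[E EQ ->] BR | //]; exfalso.
    have E0 : E != set0 by apply: contraNneq (nc0 nq) => <-.
    case/set0Pn: E0 => x xE.
    have h1 := sQ nq EQ xE.
    have := subsetP BR x (subsetP (sub_aB m E) x xE); rewrite inE => h2; tolia.
  - move=> BRm; rewrite BRm orbT /=; move: BRm; rewrite in_setD1 => /andP[_ BR].
    exact: blk_sub nr BR.
rewrite /hR ePR; case mR: ([set m] \in R).
  have nex : ~~ [exists B in gP m Q R, (B \subset Rm m) && (m \in B)].
    apply/exists_inP => [[B BP /andP[BR mB]]].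
    have : B \in PR m (gP m Q R) by rewrite inE BP BR.
    rewrite ePR in_setD1 => /andP[Bm BR'].
    have := shared nr BR' mR Bm mB (set11 m).
    by rewrite /ndprop is_min1 cards1 /= !andbF.
  rewrite (negbTE nex) setUC; exact: setD1K.
have mRm : m \in Rm m by rewrite inE.
have [F FR mF] := blk_cov nr mRm.
have Fm : F != [set m] by apply: contraFneq mR => <-.
have ex : [exists B in gP m Q R, (B \subset Rm m) && (m \in B)].
  apply/exists_inP; exists F; last by rewrite (blk_sub nr FR) mF.
  by rewrite in_setU in_setD1 Fm FR orbT.
rewrite ex setU0; apply/setP => B; rewrite in_setD1; case: eqP => // ->; by rewrite mR.
Qed.

End C.

Section Count.
Variable n : nat.
Local Notation T := 'I_n.+1.

Definition Rp := [set i : T | (0 < i)%N].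

Lemma count_m (m : T) : (0 < m)%N ->
  #|[set P | ncb setT P && top P m]| = #|[set P | ncb (Lm m) P]| * #|[set P | ncb (Rm m) P]|.
Proof.
move=> m0; rewrite -cardsX; symmetry.
apply: (@card_bij _ _ _ _ (fun QR => gP m QR.1 QR.2) (fun P => (hQ m P, hR m P))).
- case=> Q R; rewrite !inE /= => /andP[/NCP nq /NCP nr].
  have [nc tp] := lemA m0 nq nr; rewrite tp andbT; exact/NCP.
- move=> P; rewrite !inE => /andP[/NCP np /exists_inP[B0 B0P /and3P[oB0 mB0 /forall_inP leB0]]].
  apply/andP; split; apply/NCP.
    by apply: (lemB1 m0 np B0P oB0 mB0) => i iB; apply: leB0.
  by apply: (lemB2 np B0P oB0 mB0) => i iB; apply: leB0.
- case=> Q R; rewrite !inE /= => /andP[/NCP nq /NCP nr].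
  by rewrite (lemC1 nq nr) (lemC2 nq nr).
- move=> P; rewrite !inE => /andP[/NCP np /exists_inP[B0 B0P /and3P[oB0 mB0 /forall_inP leB0]]].
  by apply: (lemD m0 np B0P oB0 mB0) => i iB; apply: leB0.
Qed.

Lemma count_0 : #|[set P : {set {set T}} | ncb setT P && top P ord0]| = #|[set P : {set {set T}} | ncb Rp P]|.
Proof.
apply: (@card_bij _ _ _ _ (fun P => P :\ [set ord0]) (fun P => [set ord0] |: P)).
- move=> P; rewrite !inE => /andP[/NCP np /exists_inP[B0 B0P /and3P[oB0 _ /forall_inP leB0]]].
  have eB : B0 = [set ord0].
    apply/setP => i; rewrite inE; apply/idP/eqP => [iB|->//]; apply/val_inj => /=.
    by have := leB0 i iB; rewrite leqn0 => /eqP.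
  subst B0; apply/NCP; split.
  + by rewrite in_setD1 (negbTE (nc0 np)) andbF.
  + apply/setP => x; rewrite inE; apply/idP/idP.
    * case/bigcupP => E; rewrite in_setD1 => /andP[E0 EP] xE; rewrite lt0n; apply/negP => /eqP x0.
      have ex : x = ord0 by apply/val_inj.
      subst x; by move: E0; rewrite (blk0_uniq np EP B0P xE (set11 _)) eqxx.
    * move=> x0; have [E EP xE] := blk_cov np (in_setT x); apply/bigcupP; exists E => //.
      rewrite in_setD1 EP andbT; apply: contraTneq xE => ->; rewrite inE.
      by apply/negP => /eqP e; move: x0; rewrite e.
  + by move=> E F; rewrite !in_setD1 => /andP[_ EP] /andP[_ FP]; apply: (ncd np).
  + by move=> E F; rewrite !in_setD1 => /andP[_ EP] /andP[_ FP]; apply: (ncx np).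
- move=> P; rewrite !inE => /NCP np.
  have oP : forall E, E \in P -> ord0 \notin E.
    by move=> E EP; apply/negP => /(subsetP (blk_sub np EP)); rewrite inE ltnn.
  apply/andP; split; last first.
    apply/exists_inP; exists [set ord0]; first by rewrite in_setU1 eqxx.
    rewrite set11 /=; apply/forall_inP => i; by rewrite inE => /eqP ->.
  apply/NCP; split.
  + rewrite in_setU1 negb_or (nc0 np) andbT eq_sym; exact: set1_neq0.
  + apply/setP => x; rewrite inE; case: (boolP (0 < x)%N) => x0.
      have xR : x \in Rp by rewrite inE.
      have [E EP xE] := blk_cov np xR; apply/bigcupP; exists E => //; by rewrite in_setU1 EP orbT.
    apply/bigcupP; exists [set ord0]; first by rewrite in_setU1 eqxx.
    rewrite inE; apply/eqP/val_inj => /=; by move: x0; rewrite lt0n negbK => /eqP.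
  + move=> E F; rewrite !in_setU1 => /orP[/eqP->|EP] /orP[/eqP->|FP] EF.
    * by rewrite eqxx in EF.
    * apply: nd_disj => i; rewrite inE => /eqP ->; apply/negP; exact: oP.
    * by rewrite nd_sym; apply: nd_disj => i; rewrite inE => /eqP ->; apply/negP; exact: oP.
    * exact: (ncd np).
  + move=> E F; rewrite !in_setU1 => /orP[/eqP->|EP] /orP[/eqP->|FP] EF.
    * by rewrite eqxx in EF.
    * by rewrite crossing1l.
    * by rewrite crossing1r.
    * exact: (ncx np).
- move=> P; rewrite !inE => /andP[_ /exists_inP[B0 B0P /and3P[oB0 _ /forall_inP leB0]]].
  have eB : B0 = [set ord0].
    apply/setP => i; rewrite inE; apply/idP/eqP => [iB|->//]; apply/val_inj => /=.
    by have := leB0 i iB; rewrite leqn0 => /eqP.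
  by subst B0; rewrite setD1K.
- move=> P; rewrite inE => /NCP np; apply: setU1K; apply/negP => /(blk_sub np) /subsetP.
  by move=> /(_ ord0 (set11 _)); rewrite inE ltnn.
Qed.

Lemma f_I (s k : nat) : (s + k <= n.+1)%N ->
  #|[set P : {set {set T}} | ncb [set j : T | (s <= j < s + k)%N] P]| = f k.
Proof.
move=> sk.
pose h := fun i : 'I_k => (inord (s + i) : T).
have hval : forall i : 'I_k, (h i : nat) = s + i.
  move=> i; rewrite /h inordK //; have ik := ltn_ord i; tolia.
have hmono : forall i j : 'I_k, (i < j)%N -> (h i < h j)%N by move=> i j; rewrite !hval ltn_add2l.
have himg : h @: setT = [set j : T | (s <= j < s + k)%N].
  apply/setP => j; rewrite inE; apply/imsetP/idP.
    by case=> i _ ->; rewrite hval leq_addr ltn_add2l ltn_ord.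
  move=> /andP[sj jk].
  have jsk : (j - s < k)%N by tolia.
  exists (Ordinal jsk); first by rewrite inE.
  apply/val_inj => /=; rewrite hval /=; tolia.
rewrite -himg (count_rel hmono) /f; apply: eq_card => P; by rewrite !inE nclp_ncb.
Qed.

Lemma top_uniq P : ncb setT P -> \sum_(m < n.+1) (top P m : nat) = 1.
Proof.
move/NCP => np.
have [B0 B0P oB0] := blk_cov np (in_setT ord0).
case: (arg_maxnP (fun i : T => (i : nat)) oB0) => M MB0 Mmax.
have tM : top P M.
  apply/exists_inP; exists B0 => //; apply/and3P; split => //; apply/forall_inP => i iB; exact: Mmax.
rewrite (bigD1 M) //= tM big1 // => m mM.
apply/eqP; rewrite eqb0; apply/negP => /exists_inP[B BP /and3P[oB mB /forall_inP leB]].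
have eB := blk0_uniq np BP B0P oB oB0; subst B.
case/negP: mM; apply/eqP/val_inj/eqP; rewrite eqn_leq (leB _ MB0) andbT; exact: Mmax.
Qed.

Lemma f_sum : f n.+1 = \sum_(m < n.+1) #|[set P | ncb setT P && top P m]|.
Proof.
have -> : f n.+1 = #|[set P : {set {set T}} | ncb setT P]|.
  by rewrite /f; apply: eq_card => P; rewrite !inE nclp_ncb.
rewrite -sum1_card.
rewrite (eq_bigr (fun P => \sum_(m < n.+1) (top P m : nat))); last first.
  by move=> P; rewrite inE => /top_uniq ->.
rewrite exchange_big /=; apply: eq_bigr => m _.
rewrite -sum1_card [RHS]big_mkcond [LHS]big_mkcond; apply: eq_bigr => P _; rewrite !inE.
by case: (ncb _ P); case: (top P m).
Qed.

End Count.

Lemma f0 : f 0 = 1.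
Proof.
rewrite /f (_ : [set P : {set {set 'I_0}} | noncrossing_linked_partition P] = [set set0]) ?cards1 //.
apply/setP => P; rewrite !inE nclp_ncb; apply/idP/eqP.
- move/NCP => nc; apply/setP => B; rewrite inE; apply/negbTE/negP => BP.
  have B0 : B = set0 by apply/setP => -[j ij]; exfalso; move: ij; rewrite ltn0.
  by move: (nc0 nc); rewrite -B0 BP.
- move=> ->; apply/NCP; split.
  + by rewrite inE.
  + by apply/setP => -[j ij]; exfalso; move: ij; rewrite ltn0.
  + by move=> E F; rewrite inE.
  + by move=> E F; rewrite inE.
Qed.

Lemma main_rec n : f n.+1 = f n + \sum_(1 <= k < n.+1) f k * f (n.+1 - k).
Proof.
rewrite f_sum big_ord_recl /=; congr (_ + _).
- rewrite count_0 (_ : @Rp n = [set j : 'I_n.+1 | (1 <= j < 1 + n)%N]); first exact: f_I.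
  by apply/setP => j; rewrite !inE add1n ltn_ord andbT.
- rewrite big_add1 big_mkord; apply: eq_bigr => i _.
  rewrite count_m; last by rewrite lift0.
  congr (_ * _).
  + rewrite (_ : Lm _ = [set j : 'I_n.+1 | (0 <= j < 0 + i.+1)%N]).
      by apply: f_I; rewrite add0n ltnS ltnW.
    by apply/setP => j; rewrite !inE ?lift0 ?add0n.
  + rewrite (_ : Rm _ = [set j : 'I_n.+1 | (i.+1 <= j < i.+1 + (n.+1 - i.+1))%N]).
      by apply: f_I; rewrite subnKC // ltnS ltnW.
    by apply/setP => j; rewrite !inE ?lift0 subnKC ?ltn_ord ?andbT // ltnS ltnW.
Qed.

Theorem proposition2p2 :
  f 1 = 1 /\
  (forall n : nat, (1 <= n)%N ->
     f n.+1 = f n + \sum_(1 <= k < n.+1) f k * f (n.+1 - k)).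
Proof.
split; last by move=> n _; exact: main_rec.
by rewrite main_rec f0 big_geq.
Qed.
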